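(* Let $G=\langle S_k\mid K\rangle$ be a finitely generated semigroup as described in the context, let $\mathcal{A}$ be a finite alphabet and let $X\subseteq\mathcal{A}^G$ be a tree shift. If $K$ is primitive, then for all $1\le i,j\le k$, \[ \limsup_{m\to\infty}\frac{\log p^{(s_i)}_m}{|\bar{\Delta}^{(s_i)}_m|}=\limsup_{m\to\infty}\frac{\log p^{(s_j)}_m}{|\bar{\Delta}^{(s_j)}_m|}, \] i.e. all the stem entropies $h^{(s_i)}(X)$, $1\le i\le k$, coincide (the stem entropy of $X$ exists).
   Context: Let $K$ be a $k\times k$ matrix with entries in $\{0,1\}$ indexed by $S_k=\{s_1,\dots,s_k\}$, and let $G=\langle S_k\mid K\rangle$ be the semigroup generated by $S_k$ subject to the relations $s_is_j=1_G$ if and only if $K(s_i,s_j)=0$ ($1_G$ the identity). Every $g\in G$ has a unique minimal representation $g=g_1g_2\cdots g_n$ with $g_l\in S_k$ and $K(g_l,g_{l+1})=1$; its length is $|g|=n$ (with $|1_G|=0$). For $g\in G$ and $n\ge0$ the $n$-semiball at $g$ is $\bar{\Delta}^{(g)}_n=\{gh: h\in G,\ |h|\le n,\ |gh|=|g|+|h|\}$. For a finite alphabet $\mathcal{A}$, a pattern is a map $u:H\to\mathcal{A}$ with $H\subset G$ finite; $u$ is accepted by $t\in\mathcal{A}^G$ if there is $g\in G$ with $t_{gh}=u_h$ for all $h\in H$. A tree shift is a subset $X\subseteq\mathcal{A}^G$ consisting of all $t$ that accept no pattern from some fixed set $\mathcal{F}$ of patterns. $p^{(g)}_n$ denotes the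 number of patterns $u\in\mathcal{A}^{\bar{\Delta}^{(g)}_n}$ accepted by some $t\in X$. The $i$th stem entropy is $h^{(s_i)}(X)=\limsup_{n\to\infty}\log p^{(s_i)}_n/|\bar{\Delta}^{(s_i)}_n|$. A nonnegative square matrix is primitive if some power of it has all entries positive. *)

(* Defs.v *)
From HB Require Import structures.
From mathcomp Require Import all_boot all_order all_algebra.
From mathcomp Require Import all_classical all_reals all_analysis.
Set Implicit Arguments. Unset Strict Implicit. Unset Printing Implicit Defensive.
Import Order.TTheory GRing.Theory Num.Theory.
Local Open Scope ring_scope.
Local Open Scope classical_set_scope.

Section Semigroup.
Variables (k : nat) (K : rel 'I_k).
(* K i j = true  <->  K(s_i,s_j) = 1 ;  K i j = false  <->  s_i s_j = 1_G *)

(* Elements of G = <S_k | K> : minimal (reduced) words g_1 ... g_n with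
   K(g_l, g_{l+1}) = 1; the empty word is 1_G. *)
Definition G := {w : seq 'I_k | sorted K w}.

Definition one : G := exist _ [::] isT.
Definition gen (i : 'I_k) : G := exist _ [:: i] isT.
Definition len (g : G) : nat := size (val g).

(* right multiplication of a reduced word by a generator, using s_i s_j = 1
   iff K(s_i,s_j) = 0 *)
Definition push (w : seq 'I_k) (s : 'I_k) : seq 'I_k :=
  match w with
  | [::] => [:: s]
  | x :: w' => if K (last x w') s then rcons w s else belast x w'
  end.

Lemma path_belast x y s : path K x (y :: s) -> path K x (belast y s).
Proof.
elim: s x y => [|z s IH] x y //=.
by case/andP=> -> /IH ->.
Qed.

Lemma sorted_push w s : sorted K w -> sorted K (push w s).
Proof.
case: w => [|x w] //= Hw.
case: ifP => Hl.
  by rewrite /= rcons_path Hw Hl.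
by case: w Hw {Hl} => [|y w] //= /path_belast.
Qed.

Lemma sorted_foldl_push w v : sorted K w -> sorted K (foldl push w v).
Proof. by elim: v w => [|s v IH] w //= Hw; apply/IH/sorted_push. Qed.

Definition mul (g h : G) : G :=
  exist _ (foldl push (val g) (val h)) (sorted_foldl_push (val h) (valP g)).

Definition ball_words (n : nat) : seq G :=
  pmap insub (flatten [seq [seq val t | t <- enum {: m.-tuple 'I_k}]
                       | m <- iota 0 n.+1]).

Definition semiball (g : G) (n : nat) : seq G :=
  undup [seq mul g h | h <- ball_words n & len (mul g h) == len g + len h].

Variable A : finType.

(* a pattern u : H -> A with H finite is given by (H, u) with H : seq G;
   it is accepted by t if t_{gh} = u_h for all h in H, for some g *)
Definition accepts (t : G -> A) (H : seq G) (u : G -> A) : Prop :=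
  exists g : G, forall h, h \in H -> t (mul g h) = u h.

Definition is_tree_shift (X : set (G -> A)) : Prop :=
  exists F : set (seq G * (G -> A)),
    forall t, X t <-> (forall p, F p -> ~ accepts t p.1 p.2).

(* A pattern on D = semiball g n is identified with the vector of its values
   indexed by positions of the (duplicate-free) list D; acceptance
   (exists g', t_{g'h} = u_h for all h in D) is unfolded accordingly. *)
Definition npatterns (X : set (G -> A)) (g : G) (n : nat) : nat :=
  let D := semiball g n in
  #| [set f : {ffun 'I_(size D) -> A} |
       `[< exists t, X t /\
             exists g' : G, forall i : 'I_(size D), t (mul g' (nth one D i)) = f i >]] |.

Definition stem_entropy (R : realType) (X : set (G -> A)) (i : 'I_k) : \bar R :=
  limn_esup (fun m => (ln ((npatterns X (gen i) m)%:R : R)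
                        / (size (semiball (gen i) m))%:R)%:E).

End Semigroup.

Definition Kmx (k : nat) (K : rel 'I_k) : 'M[int]_k :=
  \matrix_(i, j) (K i j)%:R.

Definition mxpow (k : nat) (M : 'M[int]_k) (m : nat) : 'M[int]_k :=
  iter m (fun B => M *m B) 1%:M.

Definition primitive (k : nat) (M : 'M[int]_k) : Prop :=
  exists m : nat, (0 < m)%N /\ forall i j : 'I_k, 0 < mxpow M m i j.

(* Main.v *)
Require Import Defs.
From HB Require Import structures.
From mathcomp Require Import all_boot all_order all_algebra.
From mathcomp Require Import all_classical all_reals all_analysis.
Set Implicit Arguments. Unset Strict Implicit. Unset Printing Implicit Defensive.
From mathcomp Require Import zify ring lra.
Import Order.TTheory GRing.Theory Num.Theory.

Section Comb.
Variables (k : nat) (K : rel 'I_k).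
Local Arguments push : simpl never.

Lemma size_push w y : size (push K w y) <= (size w).+1.
Proof.
rewrite /push; case: w => [|x w] //=; case: ifP => _; first by rewrite /= size_rcons.
by rewrite size_belast leqW.
Qed.

Lemma size_foldl_push w s : size (foldl (push K) w s) <= size w + size s.
Proof.
elim: s w => [|y s IH] w /=; first by rewrite addn0.
by rewrite (leq_trans (IH _)) // addnS -addSn leq_add2r size_push.
Qed.

Lemma push_cons x w y : push K (x :: w) y =
  if K (last x w) y then rcons (x :: w) y else belast x w.
Proof. by []. Qed.

Lemma foldl_push_cat x w s : path K (last x w) s ->
  foldl (push K) (x :: w) s = x :: w ++ s.
Proof.
elim: s w => [|y s IH] w /=; first by rewrite cats0.
case/andP=> Hy Hs; rewrite push_cons Hy rcons_cons IH; last by rewrite last_rcons.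
by rewrite cat_rcons.
Qed.

Lemma foldl_push_size x w s :
  size (foldl (push K) (x :: w) s) = size (x :: w) + size s ->
  path K (last x w) s.
Proof.
elim: s w => [|y s IH] w //=; rewrite push_cons.
case: ifP => Hy.
  rewrite rcons_cons => H /=.
  have := IH (rcons w y); rewrite last_rcons; apply.
  by rewrite H /= size_rcons addnS.
move=> H; exfalso; move: (size_foldl_push (belast x w) s).
rewrite H size_belast /= => ?; lia.
Qed.


Notation GK := (G K).

Lemma mul_gen_path a (h : GK) : path K a (val h) ->
  val (Defs.mul (gen K a) h) = a :: val h.
Proof. by move=> H; rewrite /= (@foldl_push_cat a [::]). Qed.

Lemma mem_ball_words n (h : GK) : (h \in ball_words K n) = (len h <= n).
Proof.
rewrite /ball_words mem_pmap_sub; apply/flattenP/idP.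
  case=> l /mapP [m Hm ->] /mapP [t _ Ht].
  by rewrite /len Ht size_tuple; move: Hm; rewrite mem_iota add0n ltnS.
move=> Hh; exists [seq val t | t <- enum {: (len h).-tuple 'I_k}].
  by apply/mapP; exists (len h) => //; rewrite mem_iota add0n ltnS.
by apply/mapP; exists (in_tuple (val h)) => //; rewrite mem_enum.
Qed.

Lemma mem_semiball_gen a n (x : GK) : x \in semiball (gen K a) n ->
  exists2 s, val x = a :: s & path K a s && (size s <= n).
Proof.
rewrite mem_undup => /mapP [h]; rewrite mem_filter => /andP [Hl Hb] ->.
have Hp : path K a (val h).
  by apply: (@foldl_push_size a [::]); move/eqP: Hl.
exists (val h); first exact: mul_gen_path.
by rewrite Hp -mem_ball_words.
Qed.

Lemma semiball_gen_mem a n (x : GK) s : val x = a :: s -> path K a s ->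
  size s <= n -> x \in semiball (gen K a) n.
Proof.
move=> Hx Hp Hs; rewrite mem_undup; apply/mapP.
have Ss : sorted K s by exact: path_sorted Hp.
exists (exist _ s Ss : GK); last first.
  by apply: val_inj; rewrite Hx mul_gen_path.
rewrite mem_filter mem_ball_words /len /= Hs andbT.
by rewrite (@foldl_push_cat a [::]).
Qed.


Lemma uniq_flatten_map (T I : eqType) (F : I -> seq T) (key : T -> I) (r : seq I) :
  uniq r -> {in r, forall i, uniq (F i)} ->
  {in r, forall i x, x \in F i -> key x = i} ->
  uniq (flatten (map F r)).
Proof.
elim: r => [|i r IH] //= /andP [ir Ur] UF HF.
rewrite cat_uniq UF ?inE ?eqxx // IH //; last 2 first.
- by move=> j jr; apply: UF; rewrite inE jr orbT.
- by move=> j jr; apply: HF; rewrite inE jr orbT.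
rewrite andbT; apply/hasP => -[x /flattenP [l /mapP [j jr ->]] xj xi].
move: ir; rewrite -(HF _ _ _ xi) ?inE ?eqxx // (HF _ _ _ xj) ?jr //.
by rewrite inE jr orbT.
Qed.

Definition Ldec a n : seq GK := gen K a ::
  flatten (map (fun b => map (Defs.mul (gen K a)) (semiball (gen K b) n))
               [seq b <- enum 'I_k | K a b]).

Lemma mem_Ldec a n (x : GK) : x \in Ldec a n ->
  x = gen K a \/ exists b, exists2 y, K a b /\ y \in semiball (gen K b) n & x = Defs.mul (gen K a) y.
Proof.
rewrite inE => /orP [/eqP ->|]; first by left.
case/flattenP => l /mapP [b]; rewrite mem_filter => /andP [Hab _] -> /mapP [y Hy ->].
by right; exists b, y.
Qed.

Lemma Ldec_sub a n : {subset Ldec a n <= semiball (gen K a) n.+1}.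
Proof.
move=> x /mem_Ldec [->|[b [y [Hab Hy] ->]]].
  by apply: (@semiball_gen_mem _ _ _ [::]).
case: (mem_semiball_gen Hy) => s Hys /andP [Hp Hs].
have Hp' : path K a (val y) by rewrite Hys /= Hab.
apply: (@semiball_gen_mem _ _ _ (val y)) => //; first exact: mul_gen_path.
by rewrite Hys.
Qed.

Lemma sub_Ldec a n : {subset semiball (gen K a) n.+1 <= Ldec a n}.
Proof.
move=> x /mem_semiball_gen [[|b s] Hx /andP [Hp Hs]].
  by rewrite inE; apply/orP; left; apply/eqP/val_inj.
case/andP: Hp => Hab Hp.
have Ss : sorted K (b :: s) by [].
rewrite inE; apply/orP; right; apply/flattenP.
exists (map (Defs.mul (gen K a)) (semiball (gen K b) n)).
  by apply/mapP; exists b => //; rewrite mem_filter Hab mem_enum.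
apply/mapP; exists (exist _ (b :: s) Ss : GK).
  by apply: (@semiball_gen_mem _ _ _ s).
by apply: val_inj; rewrite Hx mul_gen_path //= Hab.
Qed.

Definition key2 (a : 'I_k) (x : GK) : 'I_k := nth a (val x) 1.

Lemma uniq_Ldec a n : uniq (Ldec a n).
Proof.
rewrite /Ldec cons_uniq; apply/andP; split.
  apply/negP => /flattenP [l /mapP [b]]; rewrite mem_filter => /andP [Hab _] ->.
  case/mapP => y Hy Hg.
  case: (mem_semiball_gen Hy) => s Hys /andP [Hp Hs].
  have Hv : val (Defs.mul (gen K a) y) = a :: b :: s.
    by rewrite mul_gen_path Hys //= Hab.
  by have := congr1 (size \o val) Hg; rewrite /comp Hv.
apply: (@uniq_flatten_map _ _ (fun b => map (Defs.mul (gen K a)) (semiball (gen K b) n)) (key2 a)); first by rewrite filter_uniq // enum_uniq.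
  move=> b; rewrite mem_filter => /andP [Hab _].
  have Hinj : {in semiball (gen K b) n &, injective (Defs.mul (gen K a))}.
    move=> y1 y2 H1 H2 E; apply: val_inj.
    case: (mem_semiball_gen H1) => s1 E1 /andP [P1 _].
    case: (mem_semiball_gen H2) => s2 E2 /andP [P2 _].
    have := congr1 val E; rewrite !mul_gen_path ?E1 ?E2 //= ?Hab //.
    by case=> ->.
  by rewrite (map_inj_in_uniq Hinj) undup_uniq.
move=> b; rewrite mem_filter => /andP [Hab _] x /mapP [y Hy ->].
case: (mem_semiball_gen Hy) => s1 E1 /andP [P1 _].
by rewrite /key2 mul_gen_path E1 //= Hab.
Qed.

Lemma size_Ldec a n : size (semiball (gen K a) n.+1) =
  (\sum_(b | K a b) size (semiball (gen K b) n)).+1.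
Proof.
have -> : size (semiball (gen K a) n.+1) = size (Ldec a n).
  apply/eqP; rewrite eqn_leq !uniq_leq_size ?undup_uniq ?uniq_Ldec //.
    exact: Ldec_sub.
  exact: sub_Ldec.
rewrite /= size_flatten sumnE /shape -map_comp big_map big_filter.
congr (_.+1); rewrite big_enum_cond /=; apply: eq_big => // b _.
by rewrite size_map.
Qed.


End Comb.

Section Count.
Variables (k : nat) (K : rel 'I_k) (A : finType) (X : set (G K -> A)).
Local Notation GK := (G K).
Local Notation one := (Defs.one K).

Definition pats (D : seq GK) := [set f : {ffun 'I_(size D) -> A} |
  `[< exists t, X t /\ exists g' : GK,
       forall i : 'I_(size D), t (Defs.mul g' (nth one D i)) = f i >]].

Lemma val_mul (g h : GK) : val (Defs.mul g h) = foldl (push K) (val g) (val h).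
Proof. by []. Qed.

Definition cnt (D : seq GK) : nat := #|pats D|.

Lemma npatternsE g n : npatterns X g n = cnt (semiball g n).
Proof. by apply: eq_card => f; rewrite [in LHS]unfold_in inE; apply/asboolP/idP. Qed.

Lemma cnt_sub D D' : {subset D <= D'} -> cnt D <= cnt D'.
Proof.
move=> sub.
have Hi (i : 'I_(size D)) : index (nth one D i) D' < size D'.
  by rewrite index_mem; apply: sub; apply: mem_nth.
pose idx (i : 'I_(size D)) : 'I_(size D') := Ordinal (Hi i).
have Hidx i : nth one D' (idx i) = nth one D i.
  by rewrite /= nth_index //; apply: sub; apply: mem_nth.
pose phi (f : {ffun 'I_(size D') -> A}) : {ffun 'I_(size D) -> A} :=
  [ffun i => f (idx i)].
have : pats D \subset phi @: pats D'.
  apply/fintype.subsetP => f; rewrite inE => /asboolP [t [Xt [g' Hg]]].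
  apply/imsetP; exists [ffun j : 'I_(size D') => t (Defs.mul g' (nth one D' j))].
    by rewrite inE; apply/asboolP; exists t; split => //; exists g' => j; rewrite ffunE.
  by apply/ffunP => i; rewrite !ffunE Hidx Hg.
move/subset_leq_card => H; exact: leq_trans H (leq_imset_card _ _).
Qed.

Lemma cnt_cat D1 D2 : cnt (D1 ++ D2) <= cnt D1 * cnt D2.
Proof.
have H1 (i : 'I_(size D1)) : i < size (D1 ++ D2) by rewrite size_cat ltn_addr.
have H2 (j : 'I_(size D2)) : size D1 + j < size (D1 ++ D2).
  by rewrite size_cat ltn_add2l.
pose idx1 i := Ordinal (H1 i).
pose idx2 j := Ordinal (H2 j).
have N1 i : nth one (D1 ++ D2) (idx1 i) = nth one D1 i by rewrite nth_cat /= ltn_ord.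
have N2 j : nth one (D1 ++ D2) (idx2 j) = nth one D2 j.
  by rewrite nth_cat /= ltnNge leq_addr /= addKn.
pose psi (f : {ffun 'I_(size (D1 ++ D2)) -> A}) :
  {ffun 'I_(size D1) -> A} * {ffun 'I_(size D2) -> A} :=
  ([ffun i => f (idx1 i)], [ffun j => f (idx2 j)]).
have psi_inj : injective psi.
  move=> f f' E; apply/ffunP => i.
  case: (ltnP i (size D1)) => h.
    have -> : i = idx1 (Ordinal h) by apply: val_inj.
    by have := congr1 (fun p : {ffun 'I_(size D1) -> A} * {ffun 'I_(size D2) -> A} => p.1 (Ordinal h)) E; rewrite /= !ffunE.
  have hj : i - size D1 < size D2.
    have := ltn_ord i; move: (nat_of_ord i) h; rewrite size_cat => m h1 h2.
    by rewrite ltn_subLR.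
  have -> : i = idx2 (Ordinal hj) by apply: val_inj; rewrite /= subnKC.
  by have := congr1 (fun p : {ffun 'I_(size D1) -> A} * {ffun 'I_(size D2) -> A} => p.2 (Ordinal hj)) E; rewrite /= !ffunE.
rewrite /cnt -cardsX -(card_imset _ psi_inj); apply: subset_leq_card.
apply/fintype.subsetP => p /imsetP [f]; rewrite inE => /asboolP [t [Xt [g' Hg]]] ->.
rewrite inE /= !inE; apply/andP; split; apply/asboolP; exists t; split => //;
  exists g' => i; by rewrite ffunE -Hg ?N1 ?N2.
Qed.

Lemma cnt_translate (g0 : GK) D :
  (forall d, d \in D -> val (Defs.mul g0 d) = val g0 ++ val d) ->
  cnt (map (Defs.mul g0) D) <= cnt D.
Proof.
move=> HD.
have Hc (i : 'I_(size D)) : i < size (map (Defs.mul g0) D) by rewrite size_map.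
pose cst i := Ordinal (Hc i).
pose phi (f : {ffun 'I_(size (map (Defs.mul g0) D)) -> A}) : {ffun 'I_(size D) -> A} :=
  [ffun i => f (cst i)].
have phi_inj : injective phi.
  move=> f f' E; apply/ffunP => i.
  have hi : i < size D by have := ltn_ord i; rewrite [X in _ < X]size_map.
  have -> : i = cst (Ordinal hi) by apply: val_inj.
  by have := congr1 (fun p : {ffun 'I_(size D) -> A} => p (Ordinal hi)) E; rewrite /= !ffunE.
rewrite /cnt -(card_imset _ phi_inj); apply: subset_leq_card.
apply/fintype.subsetP => p /imsetP [f]; rewrite inE => /asboolP [t [Xt [g' Hg]]] ->.
rewrite inE; apply/asboolP; exists t; split => //; exists (Defs.mul g' g0) => i.
rewrite ffunE -Hg /= (nth_map one); last exact: ltn_ord.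
congr (t _); apply: val_inj; rewrite [LHS]val_mul [RHS]val_mul HD ?foldl_cat //.
exact: mem_nth.
Qed.

Lemma cnt_size D : cnt D <= #|A| ^ size D.
Proof.
by have := max_card (pats D); rewrite card_ffun card_ord.
Qed.

Lemma cnt_flatten (ss : seq (seq GK)) : cnt (flatten ss) <= \prod_(s <- ss) cnt s.
Proof.
elim: ss => [|s ss IH] /=; first by rewrite big_nil; apply: (leq_trans (cnt_size _)).
rewrite big_cons; apply: leq_trans (cnt_cat _ _) _; exact: leq_mul.
Qed.

End Count.

Section LnSec.
Variable R : realType.
Local Open Scope ring_scope.

Definition Ln (m : nat) : R := ln (m%:R).

Lemma Ln0 : Ln 0 = 0.
Proof. by rewrite /Ln ln0. Qed.

Lemma Ln_ge0 m : 0 <= Ln m.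
Proof.
case: m => [|m]; first by rewrite Ln0.
by rewrite /Ln ln_ge0 // ler1n.
Qed.

Lemma Ln_le m n : (m <= n)%N -> Ln m <= Ln n.
Proof.
case: m => [|m] h; first by rewrite Ln0 Ln_ge0.
have n0 : (0 < n)%N by apply: leq_trans h.
by rewrite /Ln ler_ln ?posrE ?ltr0n // ler_nat.
Qed.

Lemma LnM m n : Ln (m * n) <= Ln m + Ln n.
Proof.
case: m => [|m]; first by rewrite mul0n Ln0 add0r Ln_ge0.
case: n => [|n]; first by rewrite muln0 Ln0 addr0 Ln_ge0.
by rewrite /Ln natrM lnM ?posrE ?ltr0n.
Qed.

Lemma Ln_exp m e : Ln (m ^ e) <= e%:R * Ln m.
Proof.
elim: e => [|e IH]; first by rewrite expn0 /Ln ln1 mul0r.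
rewrite expnS; apply: le_trans (LnM _ _) _.
by rewrite -addn1 natrD mulrDl mul1r addrC lerD2r.
Qed.

Lemma Ln_prod (I : Type) (r : seq I) (P : pred I) (F : I -> nat) :
  Ln (\prod_(i <- r | P i) F i) <= \sum_(i <- r | P i) Ln (F i).
Proof.
apply: (big_ind2 (fun x y => Ln x <= y)) => //.
- by rewrite /Ln ln1.
- by move=> x1 x2 y1 y2 h1 h2; apply: le_trans (LnM _ _) _; apply: lerD.
Qed.

End LnSec.

Section Step.
Variables (k : nat) (K : rel 'I_k) (A : finType) (X : set (G K -> A)).

Lemma cnt_step a n : (cnt X (semiball (gen K a) n.+1) <=
  #|A| * \prod_(b | K a b) cnt X (semiball (gen K b) n))%N.
Proof.
apply: leq_trans (cnt_sub X (@sub_Ldec _ K a n)) _.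
rewrite /Ldec -cat1s; apply: leq_trans (cnt_cat _ _ _) _; apply: leq_mul.
  by apply: leq_trans (cnt_size _ _) _; rewrite expn1.
apply: leq_trans (cnt_flatten _ _) _.
rewrite big_map big_filter big_enum_cond /=; apply: leq_prod => b Hab.
apply: cnt_translate => d Hd.
case: (mem_semiball_gen Hd) => s Hs /andP [Hp _].
by rewrite mul_gen_path // Hs /= Hab.
Qed.

Lemma Ln_step (R : realType) a n :
  (Ln R (cnt X (semiball (gen K a) n.+1)) <=
  Ln R #|A| + \sum_(b | K a b) Ln R (cnt X (semiball (gen K b) n)))%R.
Proof.
apply: le_trans (Ln_le R (cnt_step a n)) _.
apply: le_trans (LnM _ _ _) _; rewrite lerD2l; exact: Ln_prod.
Qed.

Lemma Ln_cnt_bound (R : realType) D :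
  (Ln R (cnt X D) <= (size D)%:R * Ln R #|A|)%R.
Proof. exact: le_trans (Ln_le R (cnt_size X D)) (Ln_exp _ _ _). Qed.

End Step.

Section Sizes.
Variables (k : nat) (K : rel 'I_k).

Definition N (a : 'I_k) n := size (semiball (gen K a) n).

Fixpoint reach (m : nat) (b c : 'I_k) : bool :=
  if m is m'.+1 then [exists d, K b d && reach m' d c] else b == c.

Lemma N_pos a n : (0 < N a n)%N.
Proof.
apply: (@leq_trans (size [:: gen K a])) => //.
apply: uniq_leq_size => // x; rewrite inE => /eqP ->.
exact: (@semiball_gen_mem _ _ _ _ _ [::]).
Qed.

Lemma N_succ a n : N a n.+1 = (\sum_(b | K a b) N b n).+1.
Proof. exact: size_Ldec. Qed.

Lemma N_mono a n : (N a n <= N a n.+1)%N.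
Proof.
apply: uniq_leq_size; first exact: undup_uniq.
move=> x /mem_semiball_gen [s Hx /andP [Hp Hs]].
by apply: (semiball_gen_mem Hx Hp); apply: leqW.
Qed.

Lemma N_mono_le a m n : (m <= n)%N -> (N a m <= N a n)%N.
Proof.
move/subnKC <-; elim: (n - m)%N => [|j IH]; first by rewrite addn0.
by apply: leq_trans IH _; rewrite addnS N_mono.
Qed.

Lemma N_K a b n : K a b -> (N b n < N a n.+1)%N.
Proof.
move=> Hab; rewrite N_succ ltnS (bigD1 b) //=; exact: leq_addr.
Qed.

Lemma N_reach l a c n : reach l a c -> (N c n <= N a (n + l))%N.
Proof.
elim: l a => [|l IH] a /=; first by move/eqP ->; rewrite addn0.
case/existsP => d /andP [Had Hr].
by apply: leq_trans (IH _ Hr) _; rewrite addnS; apply: ltnW; apply: N_K.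
Qed.

Definition Nmax n := (\max_(c < k) N c n)%N.

Lemma N_le_max a n : (N a n <= Nmax n)%N.
Proof. exact: (@leq_bigmax_cond _ xpredT (fun c => N c n) a). Qed.

Lemma Nmax_succ n : (Nmax n.+1 <= k.+1 * Nmax n)%N.
Proof.
apply/bigmax_leqP => a _; rewrite N_succ mulSn.
have H1 : (1 <= Nmax n)%N by apply: leq_trans (N_pos a n) (N_le_max a n).
rewrite -addn1 addnC leq_add // .
apply: (@leq_trans (\sum_(b < k) Nmax n)).
  apply: (@leq_trans (\sum_(b < k | K a b) Nmax n)).
    by apply: leq_sum => b _; apply: N_le_max.
  by rewrite [X in (X <= _)%N]big_mkcond; apply: leq_sum => b _; case: (K a b).
by rewrite sum_nat_const card_ord.
Qed.

Lemma Nmax_add n j : (Nmax (n + j) <= k.+1 ^ j * Nmax n)%N.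
Proof.
elim: j => [|j IH]; first by rewrite addn0 expn0 mul1n.
rewrite addnS expnS -mulnA; apply: leq_trans (Nmax_succ _) _.
by rewrite leq_mul2l IH orbT.
Qed.

Lemma N_comp M a b n : (forall c, reach M b c) ->
  (N a (n + M).+1 <= k.+1 ^ M.+1 * N b (n + M))%N.
Proof.
move=> HM; apply: leq_trans (N_le_max a _) _.
rewrite -addnS; apply: leq_trans (Nmax_add _ _) _.
rewrite leq_mul2l; apply/orP; right.
by apply/bigmax_leqP => c _; apply: N_reach.
Qed.

Lemma N_lin a n : (exists d, K a d) -> (forall c, exists d, K c d) -> (n < N a n)%N.
Proof.
move=> _ Hs; elim: n a => [|n IH] a; first exact: N_pos.
by case: (Hs a) => d Hd; apply: leq_trans (N_K n Hd); rewrite ltnS IH.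
Qed.

Lemma mxpow_reach m i j : mxpow (Kmx K) m i j != 0 -> reach m i j.
Proof.
elim: m i => [|m IH] i /=.
  by rewrite /mxpow /= mxE; case: (i == j).
rewrite mxE => H.
have [//|Hn] := boolP [exists d, K i d && reach m d j].
exfalso; move/eqP: H; apply.
rewrite big1 // => d _; rewrite /Kmx mxE.
case Hid: (K i d); last by rewrite mul0r.
case Hr: (mxpow (Kmx K) m d j == 0); first by rewrite (eqP Hr) mulr0.
by move/existsPn: Hn => /(_ d); rewrite Hid IH // Hr.
Qed.

End Sizes.

Section Limsup.
Variable R : realType.
Local Open Scope ring_scope.
Local Open Scope classical_set_scope.

Lemma limsupE (u : nat -> R) :
  limn_esup (fun n => (u n)%:E) = ereal_inf (range (esups (fun n => (u n)%:E))).
Proof. by rewrite limn_esup_lim; apply/cvg_lim => //; exact: cvg_esups_inf. Qed.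

Lemma limsup_le (u : nat -> R) (c : R) N0 :
  (forall n, (N0 <= n)%N -> u n <= c) -> (limn_esup (fun n => (u n)%:E) <= c%:E)%E.
Proof.
move=> H; rewrite limsupE; apply: ge_ereal_inf; exists (esups (fun n => (u n)%:E) N0).
  by exists N0.
by apply/ereal_supP => _ [m /= Hm <-]; rewrite lee_fin H.
Qed.

Lemma limsup_ge0 (u : nat -> R) :
  (forall n, 0 <= u n) -> (0 <= limn_esup (fun n => (u n)%:E))%E.
Proof.
move=> H; rewrite limsupE; apply/ereal_infP => _ [n _ <-].
apply: (@le_trans _ _ (u n)%:E); first by rewrite lee_fin H.
by apply: ereal_sup_ubound; exists n => /=.
Qed.

Lemma limsup_ev (u : nat -> R) (l e : R) :
  limn_esup (fun n => (u n)%:E) = l%:E -> 0 < e ->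
  exists N0, forall n, (N0 <= n)%N -> u n <= l + e.
Proof.
move=> Hl He.
have : (ereal_inf (range (esups (fun n => (u n)%:E))) < (l + e)%:E)%E.
  by rewrite -limsupE Hl lte_fin ltrDl.
case/ereal_inf_lt => _ [N0 _ <-] HN; exists N0 => n Hn.
rewrite -lee_fin; apply: ltW; apply: le_lt_trans HN.
by apply: ereal_sup_ubound; exists n.
Qed.

Lemma limsup_fin (u : nat -> R) (B : R) :
  (forall n, 0 <= u n <= B) -> exists h, limn_esup (fun n => (u n)%:E) = h%:E /\ 0 <= h <= B.
Proof.
move=> H.
have H0 : (0 <= limn_esup (fun n => (u n)%:E))%E.
  by apply: limsup_ge0 => n; case/andP: (H n).
have H1 : (limn_esup (fun n => (u n)%:E) <= B%:E)%E.
  by apply: (@limsup_le _ _ 0) => n _; case/andP: (H n).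
move: H0 H1; case: (limn_esup _) => [h| |] //= H0 H1.
by exists h; split => //; rewrite -!lee_fin H0 H1.
Qed.

End Limsup.

Section Main.
Variables (R : realType) (k : nat) (K : rel 'I_k) (A : finType) (X : set (G K -> A)).
Variable M : nat.
Hypothesis HM : forall b c, reach K M b c.
Hypothesis HM0 : (0 < M)%N.
Local Open Scope ring_scope.

Definition B := Ln R #|A|.
Definition r a n : R := Ln R (cnt X (semiball (gen K a) n)) / (N K a n)%:R.

Lemma Npos a n : 0 < (N K a n)%:R :> R.
Proof. by rewrite ltr0n N_pos. Qed.

Lemma Lr a n : Ln R (cnt X (semiball (gen K a) n)) = (N K a n)%:R * r a n.
Proof. by rewrite /r mulrC divfK // gt_eqF // Npos. Qed.

Lemma r_bounds a n : 0 <= r a n <= B.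
Proof.
apply/andP; split; first by rewrite /r divr_ge0 // Ln_ge0.
rewrite /r ler_pdivrMr ?Npos // mulrC; exact: Ln_cnt_bound.
Qed.

Lemma succ_ex c : exists d, K c d.
Proof.
move: (HM c c); case: M HM0 => [|m] //= _ /existsP [d /andP [Hd _]].
by exists d.
Qed.

Lemma propagate (h : 'I_k -> R)
  (Hh : forall a, limn_esup (fun n => (r a n)%:E) = (h a)%:E) a b :
  (forall c, h c <= h a) -> K a b -> h a <= h b.
Proof.
move=> Hmax Hab; rewrite leNgt; apply/negP => Hlt.
pose H := h a; pose d := H - h b.
have d0 : 0 < d by rewrite subr_gt0.
pose C : nat := (k.+1 ^ M.+1)%N.
have C0 : 0 < C%:R :> R by rewrite ltr0n expn_gt0.
pose D := d / C%:R.
have D0 : 0 < D by rewrite divr_gt0.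
have eta0 : 0 < D / 4 by rewrite divr_gt0.
have H0 : 0 <= H.
  have := @limsup_ge0 R (r a) (fun n => proj1 (andP (r_bounds a n))).
  by rewrite Hh lee_fin.
have Hev : exists N0, forall c n, (N0 <= n)%N -> r c n <= h c + D / 4.
  have : forall s : seq 'I_k, exists N0, forall c n, c \in s -> (N0 <= n)%N ->
      r c n <= h c + D / 4.
    elim => [|c s [N1 IH]]; first by exists 0%N.
    case: (limsup_ev (Hh c) eta0) => N2 H2; exists (maxn N1 N2) => c' n.
    rewrite inE => /orP [/eqP -> | cs] Hn.
      by apply: H2; apply: leq_trans Hn; apply: leq_maxr.
    by apply: IH => //; apply: leq_trans Hn; apply: leq_maxl.
  case/(_ (enum 'I_k)) => N0 HN0; exists N0 => c n; apply: HN0.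
  by rewrite mem_enum.
case: Hev => N0 HN0.
pose n1 := Num.bound (B / (D / 4)).
have Hn1 : B <= D / 4 * n1%:R.
  have B0 : 0 <= B by rewrite /B Ln_ge0.
  have := archi_boundP (divr_ge0 B0 (ltW eta0)).
  by rewrite ltr_pdivrMr // mulrC => /ltW.
pose N1 := maxn N0 (maxn M n1).
have Hbound : forall n, (N1 <= n)%N -> r a n.+1 <= H - D / 2.
  move=> n Hn.
  have HnN0 : (N0 <= n)%N by apply: leq_trans Hn; apply: leq_maxl.
  have HnM : (M <= n)%N.
    by apply: leq_trans Hn; apply: leq_trans (leq_maxr _ _); apply: leq_maxl.
  have Hnn1 : (n1 <= n)%N.
    by apply: leq_trans Hn; apply: leq_trans (leq_maxr _ _); apply: leq_maxr.
  pose Na : R := (N K a n.+1)%:R; pose Nb : R := (N K b n)%:R.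
  have Na0 : 0 < Na by rewrite /Na Npos.
  have F1 : Na * r a n.+1 <= B + \sum_(c | K a c) (N K c n)%:R * r c n.
    rewrite /Na -Lr; apply: le_trans (Ln_step X R a n) _.
    by rewrite lerD2l; apply: ler_sum => c _; rewrite Lr.
  have F2 : \sum_(c | K a c) (N K c n)%:R * r c n <=
            \sum_(c | K a c) (N K c n)%:R * (H + D / 4) - Nb * d.
    rewrite (bigD1 b) // [X in _ <= X - _](bigD1 b) //=.
    have G1 : (N K b n)%:R * r b n <= (N K b n)%:R * (H + D / 4) - Nb * d.
      rewrite /Nb -mulrBr; apply: ler_wpM2l; first exact: ler0n.
      have := HN0 b n HnN0; rewrite /d; lra.
    have G2 : \sum_(c | K a c && (c != b)) (N K c n)%:R * r c n <=
              \sum_(c | K a c && (c != b)) (N K c n)%:R * (H + D / 4).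
      apply: ler_sum => c _; apply: ler_wpM2l; first exact: ler0n.
      have := HN0 c n HnN0; have := Hmax c; rewrite /H; lra.
    lra.
  have F3 : \sum_(c | K a c) (N K c n)%:R * (H + D / 4) <= Na * (H + D / 4).
    rewrite -mulr_suml; apply: ler_wpM2r; first lra.
    by rewrite -natr_sum /Na ler_nat N_succ.
  have F4 : Na <= C%:R * Nb.
    have := N_comp a (n - M) (HM b); rewrite subnK // => HH.
    by rewrite /Na /Nb -natrM ler_nat.
  have F5 : B <= D / 4 * Na.
    apply: le_trans Hn1 _; apply: ler_wpM2l; first exact: ltW.
    rewrite /Na ler_nat; apply: leq_trans Hnn1 _; apply: leq_trans (leqnSn n) _.
    apply: ltnW; exact: (@N_lin _ K a n.+1 (succ_ex a) succ_ex).
  have F6 : Na * D <= Nb * d.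
    apply: le_trans (ler_wpM2r (ltW D0) F4) _.
    rewrite /D le_eqVlt; apply/orP; left; apply/eqP; field; exact: lt0r_neq0.
  have : Na * r a n.+1 <= Na * (H - D / 2) by nra.
  by rewrite ler_pM2l.
have := @limsup_le R (r a) (H - D / 2) N1.+1.
rewrite Hh lee_fin /H => HH.
have : h a <= h a - D / 2.
  by apply: HH => -[|n] // Hn; apply: Hbound.
lra.
Qed.

End Main.

Theorem theorem3p1 (R : realType) (k : nat) (K : rel 'I_k) (A : finType)
    (X : set (G K -> A)) :
  is_tree_shift X -> primitive (Kmx K) ->
  forall i j : 'I_k, stem_entropy R X i = stem_entropy R X j.
Proof.
move=> _ [M [HM0 Hpos]] i j.
have HM : forall b c, reach K M b c.
  by move=> b c; apply: mxpow_reach; apply: lt0r_neq0; apply: Hpos.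
have SE a : stem_entropy R X a = limn_esup (fun n => (r R X a n)%:E).
  by rewrite /stem_entropy; congr limn_esup; apply/funext => n; rewrite /r npatternsE.
pose h a := fine (limn_esup (fun n => (r R X a n)%:E)).
have Hh a : limn_esup (fun n => (r R X a n)%:E) = (h a)%:E.
  by case: (limsup_fin (r_bounds R X a)) => x [Hx _]; rewrite /h Hx.
case: (@arg_maxP _ _ 'I_k i xpredT h isT) => am _ Ham.
have Hall : forall l x c, h x = h am -> reach K l x c -> h c = h am.
  elim => [|l IH] x c Hx /=; first by move/eqP <-.
  case/existsP => d /andP [Hd Hr]; apply: (IH d) => //.
  apply/eqP; rewrite eq_le; apply/andP; split; first exact: Ham.
  rewrite -Hx; apply: (propagate HM HM0 Hh) => // c'; rewrite Hx; exact: Ham.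
by rewrite !SE !Hh (Hall M am i erefl (HM am i)) (Hall M am j erefl (HM am j)).
Qed.
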